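(* For every integer $i\ge 5$, $\overline{\alpha}(\{1,5,2i\})=\frac{i}{2i+5}$.
   Context: For a finite set $S$ of positive integers, the distance graph $G(S)$ has vertex set $\mathbb{Z}$, with $i,j$ adjacent iff $|i-j|\in S$. The density of $A\subseteq\mathbb{Z}$ is $\delta(A)=\limsup_{N\to\infty}\frac{|A\cap[-N,N]|}{2N+1}$, and the independence ratio $\overline{\alpha}(S)$ is the supremum of $\delta(A)$ over independent sets $A$ of $G(S)$. *)

(* Defs.v *)
From Stdlib Require Import Reals ZArith List ClassicalDescription.
From Coquelicot Require Import Coquelicot.
Open Scope R_scope.

Definition independent (S : list Z) (A : Z -> Prop) : Prop :=
  forall x y : Z, A x -> A y -> ~ In (Z.abs (x - y)) S.

Definition indic (A : Z -> Prop) (z : Z) : R :=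
  if excluded_middle_informative (A z) then 1 else 0.

(* |A ∩ [-N, N]|  (sum over k = 0..2N of indic A (k - N)) *)
Definition count_sym (A : Z -> Prop) (N : nat) : R :=
  sum_f_R0 (fun k => indic A (Z.of_nat k - Z.of_nat N)%Z) (2 * N).

Definition density (A : Z -> Prop) : Rbar :=
  LimSup_seq (fun N => count_sym A N / INR (2 * N + 1)).

Definition indep_ratio (S : list Z) : Rbar :=
  Lub_Rbar (fun d : R => exists A : Z -> Prop,
              independent S A /\ density A = Finite d).

(* Main.v *)
Require Import Defs.
From Stdlib Require Import Reals ZArith List.
From Coquelicot Require Import Coquelicot.
Open Scope R_scope.
From Stdlib Require Import Lia Bool Arith Lra ClassicalDescription.
Import ListNotations.
Local Open Scope nat_scope.
Definition tbl : list (nat*nat*nat*Z) := [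
(0,0,5,(-5)%Z);
(0,0,6,(-6)%Z);
(0,0,7,(-7)%Z);
(0,0,8,(-8)%Z);
(0,0,9,(-9)%Z);
(0,0,10,(-10)%Z);
(0,0,11,(-9)%Z);
(0,0,12,(-10)%Z);
(0,0,13,(-9)%Z);
(0,0,14,(-10)%Z);
(0,0,15,(-9)%Z);
(0,0,16,(-10)%Z);
(0,1,10,(-8)%Z);
(0,1,11,(-9)%Z);
(0,1,12,(-8)%Z);
(0,1,13,(-9)%Z);
(0,1,14,(-8)%Z);
(0,1,15,(-9)%Z);
(0,1,16,(-8)%Z);
(0,2,9,(-7)%Z);
(0,2,10,(-8)%Z);
(0,2,11,(-7)%Z);
(0,2,12,(-8)%Z);
(0,2,13,(-7)%Z);
(0,2,14,(-8)%Z);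
(0,2,15,(-7)%Z);
(0,2,16,(-8)%Z);
(0,4,8,(-6)%Z);
(0,4,9,(-7)%Z);
(0,4,10,(-8)%Z);
(0,4,11,(-7)%Z);
(0,4,12,(-8)%Z);
(0,4,13,(-9)%Z);
(0,4,14,(-8)%Z);
(0,4,15,(-9)%Z);
(0,4,16,(-8)%Z);
(0,5,10,(-6)%Z);
(0,5,11,(-7)%Z);
(0,5,12,(-6)%Z);
(0,5,13,(-7)%Z);
(0,5,14,(-6)%Z);
(0,5,15,(-7)%Z);
(0,5,16,(-6)%Z);
(0,8,7,(-5)%Z);
(0,8,8,(-6)%Z);
(0,8,9,(-7)%Z);
(0,8,10,(-8)%Z);
(0,8,11,(-7)%Z);
(0,8,12,(-8)%Z);
(0,8,13,(-7)%Z);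
(0,8,14,(-8)%Z);
(0,8,15,(-7)%Z);
(0,8,16,(-8)%Z);
(0,9,10,(-6)%Z);
(0,9,11,(-7)%Z);
(0,9,12,(-8)%Z);
(0,9,13,(-7)%Z);
(0,9,14,(-8)%Z);
(0,9,15,(-9)%Z);
(0,9,16,(-8)%Z);
(0,10,9,(-5)%Z);
(0,10,10,(-6)%Z);
(0,10,11,(-5)%Z);
(0,10,12,(-6)%Z);
(0,10,13,(-5)%Z);
(0,10,14,(-6)%Z);
(0,10,15,(-5)%Z);
(0,10,16,(-6)%Z);
(0,16,6,(-4)%Z);
(0,16,7,(-5)%Z);
(0,16,8,(-6)%Z);
(0,16,9,(-7)%Z);
(0,16,10,(-8)%Z);
(0,16,11,(-9)%Z);
(0,16,12,(-8)%Z);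
(0,16,13,(-9)%Z);
(0,16,14,(-8)%Z);
(0,16,15,(-9)%Z);
(0,16,16,(-8)%Z);
(0,17,10,(-6)%Z);
(0,17,11,(-7)%Z);
(0,17,12,(-6)%Z);
(0,17,13,(-7)%Z);
(0,17,14,(-6)%Z);
(0,17,15,(-7)%Z);
(0,17,16,(-6)%Z);
(0,18,9,(-5)%Z);
(0,18,10,(-6)%Z);
(0,18,11,(-7)%Z);
(0,18,12,(-6)%Z);
(0,18,13,(-7)%Z);
(0,18,14,(-8)%Z);
(0,18,15,(-7)%Z);
(0,18,16,(-8)%Z);
(0,20,8,(-4)%Z);
(0,20,9,(-5)%Z);
(0,20,10,(-6)%Z);
(0,20,11,(-7)%Z);
(0,20,12,(-6)%Z);
(0,20,13,(-7)%Z);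
(0,20,14,(-6)%Z);
(0,20,15,(-7)%Z);
(0,20,16,(-6)%Z);
(0,21,10,(-4)%Z);
(0,21,11,(-5)%Z);
(0,21,12,(-4)%Z);
(0,21,13,(-5)%Z);
(0,21,14,(-4)%Z);
(0,21,15,(-5)%Z);
(0,21,16,(-4)%Z);
(1,0,6,(-4)%Z);
(1,0,7,(-5)%Z);
(1,0,8,(-6)%Z);
(1,0,9,(-7)%Z);
(1,0,10,(-8)%Z);
(1,0,11,(-9)%Z);
(1,0,12,(-8)%Z);
(1,0,13,(-9)%Z);
(1,0,14,(-8)%Z);
(1,0,15,(-9)%Z);
(1,0,16,(-8)%Z);
(1,1,5,(-3)%Z);
(1,1,11,(-7)%Z);
(1,1,12,(-8)%Z);
(1,1,13,(-7)%Z);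
(1,1,14,(-8)%Z);
(1,1,15,(-7)%Z);
(1,1,16,(-8)%Z);
(1,2,10,(-6)%Z);
(1,2,11,(-7)%Z);
(1,2,12,(-6)%Z);
(1,2,13,(-7)%Z);
(1,2,14,(-6)%Z);
(1,2,15,(-7)%Z);
(1,2,16,(-6)%Z);
(1,4,9,(-5)%Z);
(1,4,10,(-6)%Z);
(1,4,11,(-7)%Z);
(1,4,12,(-6)%Z);
(1,4,13,(-7)%Z);
(1,4,14,(-8)%Z);
(1,4,15,(-7)%Z);
(1,4,16,(-8)%Z);
(1,5,11,(-5)%Z);
(1,5,12,(-6)%Z);
(1,5,13,(-5)%Z);
(1,5,14,(-6)%Z);
(1,5,15,(-5)%Z);
(1,5,16,(-6)%Z);
(1,8,8,(-4)%Z);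
(1,8,9,(-5)%Z);
(1,8,10,(-6)%Z);
(1,8,11,(-7)%Z);
(1,8,12,(-6)%Z);
(1,8,13,(-7)%Z);
(1,8,14,(-6)%Z);
(1,8,15,(-7)%Z);
(1,8,16,(-6)%Z);
(1,9,11,(-5)%Z);
(1,9,12,(-6)%Z);
(1,9,13,(-7)%Z);
(1,9,14,(-6)%Z);
(1,9,15,(-7)%Z);
(1,9,16,(-8)%Z);
(1,10,10,(-4)%Z);
(1,10,11,(-5)%Z);
(1,10,12,(-4)%Z);
(1,10,13,(-5)%Z);
(1,10,14,(-4)%Z);
(1,10,15,(-5)%Z);
(1,10,16,(-4)%Z);
(1,16,7,(-3)%Z);
(1,16,8,(-4)%Z);
(1,16,9,(-5)%Z);
(1,16,10,(-6)%Z);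
(1,16,11,(-7)%Z);
(1,16,12,(-8)%Z);
(1,16,13,(-7)%Z);
(1,16,14,(-8)%Z);
(1,16,15,(-7)%Z);
(1,16,16,(-8)%Z);
(1,17,11,(-5)%Z);
(1,17,12,(-6)%Z);
(1,17,13,(-5)%Z);
(1,17,14,(-6)%Z);
(1,17,15,(-5)%Z);
(1,17,16,(-6)%Z);
(1,18,10,(-4)%Z);
(1,18,11,(-5)%Z);
(1,18,12,(-6)%Z);
(1,18,13,(-5)%Z);
(1,18,14,(-6)%Z);
(1,18,15,(-7)%Z);
(1,18,16,(-6)%Z);
(1,20,9,(-3)%Z);
(1,20,10,(-4)%Z);
(1,20,11,(-5)%Z);
(1,20,12,(-6)%Z);
(1,20,13,(-5)%Z);
(1,20,14,(-6)%Z);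
(1,20,15,(-5)%Z);
(1,20,16,(-6)%Z);
(1,21,11,(-3)%Z);
(1,21,12,(-4)%Z);
(1,21,13,(-3)%Z);
(1,21,14,(-4)%Z);
(1,21,15,(-3)%Z);
(1,21,16,(-4)%Z);
(2,0,7,(-5)%Z);
(2,0,8,(-6)%Z);
(2,0,9,(-7)%Z);
(2,0,10,(-8)%Z);
(2,0,11,(-7)%Z);
(2,0,12,(-8)%Z);
(2,0,13,(-7)%Z);
(2,0,14,(-8)%Z);
(2,0,15,(-7)%Z);
(2,0,16,(-8)%Z);
(2,1,6,(-4)%Z);
(2,1,10,(-6)%Z);
(2,1,12,(-6)%Z);
(2,1,13,(-7)%Z);
(2,1,14,(-6)%Z);
(2,1,15,(-9)%Z);
(2,1,16,(-6)%Z);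
(2,2,5,(-3)%Z);
(2,2,9,(-5)%Z);
(2,2,11,(-5)%Z);
(2,2,12,(-6)%Z);
(2,2,13,(-5)%Z);
(2,2,14,(-8)%Z);
(2,2,15,(-5)%Z);
(2,2,16,(-8)%Z);
(2,4,8,(-4)%Z);
(2,4,10,(-6)%Z);
(2,4,11,(-5)%Z);
(2,4,12,(-6)%Z);
(2,4,13,(-7)%Z);
(2,4,14,(-6)%Z);
(2,4,15,(-7)%Z);
(2,4,16,(-6)%Z);
(2,5,10,(-4)%Z);
(2,5,12,(-4)%Z);
(2,5,13,(-7)%Z);
(2,5,14,(-4)%Z);
(2,5,15,(-7)%Z);
(2,5,16,(-4)%Z);
(2,8,7,(-3)%Z);
(2,8,9,(-5)%Z);
(2,8,10,(-6)%Z);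
(2,8,11,(-5)%Z);
(2,8,12,(-8)%Z);
(2,8,13,(-5)%Z);
(2,8,14,(-6)%Z);
(2,8,15,(-5)%Z);
(2,8,16,(-8)%Z);
(2,9,10,(-4)%Z);
(2,9,12,(-6)%Z);
(2,9,13,(-5)%Z);
(2,9,14,(-6)%Z);
(2,9,15,(-7)%Z);
(2,9,16,(-6)%Z);
(2,10,9,(-3)%Z);
(2,10,11,(-3)%Z);
(2,10,12,(-6)%Z);
(2,10,13,(-3)%Z);
(2,10,14,(-6)%Z);
(2,10,15,(-3)%Z);
(2,10,16,(-6)%Z);
(2,16,8,(-4)%Z);
(2,16,9,(-5)%Z);
(2,16,10,(-6)%Z);
(2,16,11,(-7)%Z);
(2,16,12,(-6)%Z);
(2,16,13,(-7)%Z);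
(2,16,14,(-6)%Z);
(2,16,15,(-7)%Z);
(2,16,16,(-6)%Z);
(2,17,6,(-2)%Z);
(2,17,10,(-4)%Z);
(2,17,12,(-4)%Z);
(2,17,13,(-5)%Z);
(2,17,14,(-4)%Z);
(2,17,15,(-7)%Z);
(2,17,16,(-4)%Z);
(2,18,9,(-3)%Z);
(2,18,11,(-5)%Z);
(2,18,12,(-4)%Z);
(2,18,13,(-5)%Z);
(2,18,14,(-6)%Z);
(2,18,15,(-5)%Z);
(2,18,16,(-6)%Z);
(2,20,8,(-2)%Z);
(2,20,10,(-4)%Z);
(2,20,11,(-5)%Z);
(2,20,12,(-4)%Z);
(2,20,13,(-7)%Z);
(2,20,14,(-4)%Z);
(2,20,15,(-5)%Z);
(2,20,16,(-4)%Z);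
(2,21,10,(-2)%Z);
(2,21,12,(-2)%Z);
(2,21,13,(-5)%Z);
(2,21,14,(-2)%Z);
(2,21,15,(-5)%Z);
(2,21,16,(-2)%Z);
(4,0,8,(-6)%Z);
(4,0,9,(-7)%Z);
(4,0,10,(-8)%Z);
(4,0,11,(-7)%Z);
(4,0,12,(-8)%Z);
(4,0,13,(-9)%Z);
(4,0,14,(-8)%Z);
(4,0,15,(-9)%Z);
(4,0,16,(-8)%Z);
(4,1,7,(-5)%Z);
(4,1,10,(-6)%Z);
(4,1,11,(-7)%Z);
(4,1,13,(-7)%Z);
(4,1,14,(-8)%Z);
(4,1,15,(-7)%Z);
(4,1,16,(-8)%Z);
(4,2,6,(-4)%Z);
(4,2,9,(-5)%Z);
(4,2,10,(-6)%Z);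
(4,2,12,(-6)%Z);
(4,2,13,(-7)%Z);
(4,2,14,(-6)%Z);
(4,2,15,(-7)%Z);
(4,2,16,(-6)%Z);
(4,4,5,(-3)%Z);
(4,4,8,(-4)%Z);
(4,4,9,(-5)%Z);
(4,4,11,(-5)%Z);
(4,4,12,(-6)%Z);
(4,4,13,(-7)%Z);
(4,4,14,(-6)%Z);
(4,4,15,(-7)%Z);
(4,4,16,(-8)%Z);
(4,5,11,(-5)%Z);
(4,5,13,(-5)%Z);
(4,5,14,(-6)%Z);
(4,5,15,(-5)%Z);
(4,5,16,(-6)%Z);
(4,8,8,(-4)%Z);
(4,8,10,(-6)%Z);
(4,8,11,(-5)%Z);
(4,8,12,(-6)%Z);
(4,8,13,(-7)%Z);
(4,8,14,(-6)%Z);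
(4,8,15,(-7)%Z);
(4,8,16,(-6)%Z);
(4,9,7,(-3)%Z);
(4,9,10,(-4)%Z);
(4,9,11,(-5)%Z);
(4,9,13,(-5)%Z);
(4,9,14,(-6)%Z);
(4,9,15,(-7)%Z);
(4,9,16,(-6)%Z);
(4,10,10,(-4)%Z);
(4,10,12,(-4)%Z);
(4,10,13,(-5)%Z);
(4,10,14,(-4)%Z);
(4,10,15,(-5)%Z);
(4,10,16,(-4)%Z);
(4,16,9,(-5)%Z);
(4,16,10,(-6)%Z);
(4,16,11,(-7)%Z);
(4,16,12,(-6)%Z);
(4,16,13,(-7)%Z);
(4,16,14,(-8)%Z);
(4,16,15,(-7)%Z);
(4,16,16,(-8)%Z);
(4,17,7,(-3)%Z);
(4,17,10,(-4)%Z);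
(4,17,11,(-5)%Z);
(4,17,13,(-5)%Z);
(4,17,14,(-6)%Z);
(4,17,15,(-5)%Z);
(4,17,16,(-6)%Z);
(4,18,6,(-2)%Z);
(4,18,9,(-3)%Z);
(4,18,10,(-4)%Z);
(4,18,12,(-4)%Z);
(4,18,13,(-5)%Z);
(4,18,14,(-6)%Z);
(4,18,15,(-5)%Z);
(4,18,16,(-6)%Z);
(4,20,9,(-3)%Z);
(4,20,11,(-5)%Z);
(4,20,12,(-4)%Z);
(4,20,13,(-5)%Z);
(4,20,14,(-6)%Z);
(4,20,15,(-5)%Z);
(4,20,16,(-6)%Z);
(4,21,11,(-3)%Z);
(4,21,13,(-3)%Z);
(4,21,14,(-4)%Z);
(4,21,15,(-3)%Z);
(4,21,16,(-4)%Z);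
(5,0,8,(-4)%Z);
(5,0,9,(-5)%Z);
(5,0,10,(-6)%Z);
(5,0,11,(-7)%Z);
(5,0,12,(-6)%Z);
(5,0,13,(-7)%Z);
(5,0,14,(-6)%Z);
(5,0,15,(-7)%Z);
(5,0,16,(-6)%Z);
(5,1,7,(-3)%Z);
(5,1,11,(-5)%Z);
(5,1,13,(-5)%Z);
(5,1,14,(-6)%Z);
(5,1,15,(-5)%Z);
(5,1,16,(-8)%Z);
(5,2,6,(-2)%Z);
(5,2,10,(-4)%Z);
(5,2,12,(-4)%Z);
(5,2,13,(-5)%Z);
(5,2,14,(-4)%Z);
(5,2,15,(-7)%Z);
(5,2,16,(-4)%Z);
(5,4,9,(-3)%Z);
(5,4,11,(-5)%Z);
(5,4,12,(-4)%Z);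
(5,4,13,(-5)%Z);
(5,4,14,(-6)%Z);
(5,4,15,(-5)%Z);
(5,4,16,(-6)%Z);
(5,5,5,(-1)%Z);
(5,5,11,(-3)%Z);
(5,5,13,(-3)%Z);
(5,5,14,(-6)%Z);
(5,5,15,(-3)%Z);
(5,5,16,(-6)%Z);
(5,8,8,(-2)%Z);
(5,8,10,(-4)%Z);
(5,8,11,(-5)%Z);
(5,8,12,(-4)%Z);
(5,8,13,(-7)%Z);
(5,8,14,(-4)%Z);
(5,8,15,(-5)%Z);
(5,8,16,(-4)%Z);
(5,9,11,(-3)%Z);
(5,9,13,(-5)%Z);
(5,9,14,(-4)%Z);
(5,9,15,(-5)%Z);
(5,9,16,(-6)%Z);
(5,10,10,(-2)%Z);
(5,10,12,(-2)%Z);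
(5,10,13,(-5)%Z);
(5,10,14,(-2)%Z);
(5,10,15,(-5)%Z);
(5,10,16,(-2)%Z);
(5,16,9,(-3)%Z);
(5,16,10,(-4)%Z);
(5,16,11,(-5)%Z);
(5,16,12,(-6)%Z);
(5,16,13,(-5)%Z);
(5,16,14,(-6)%Z);
(5,16,15,(-5)%Z);
(5,16,16,(-6)%Z);
(5,17,7,(-1)%Z);
(5,17,11,(-3)%Z);
(5,17,13,(-3)%Z);
(5,17,14,(-4)%Z);
(5,17,15,(-3)%Z);
(5,17,16,(-6)%Z);
(5,18,10,(-2)%Z);
(5,18,12,(-4)%Z);
(5,18,13,(-3)%Z);
(5,18,14,(-4)%Z);
(5,18,15,(-5)%Z);
(5,18,16,(-4)%Z);
(5,20,9,(-1)%Z);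
(5,20,11,(-3)%Z);
(5,20,12,(-4)%Z);
(5,20,13,(-3)%Z);
(5,20,14,(-6)%Z);
(5,20,15,(-3)%Z);
(5,20,16,(-4)%Z);
(5,21,11,(-1)%Z);
(5,21,13,(-1)%Z);
(5,21,14,(-4)%Z);
(5,21,15,(-1)%Z);
(5,21,16,(-4)%Z);
(8,0,9,(-7)%Z);
(8,0,10,(-8)%Z);
(8,0,11,(-7)%Z);
(8,0,12,(-8)%Z);
(8,0,13,(-7)%Z);
(8,0,14,(-8)%Z);
(8,0,15,(-7)%Z);
(8,0,16,(-8)%Z);
(8,1,8,(-6)%Z);
(8,1,10,(-6)%Z);
(8,1,11,(-7)%Z);
(8,1,12,(-6)%Z);
(8,1,14,(-6)%Z);
(8,1,15,(-9)%Z);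
(8,1,16,(-6)%Z);
(8,2,7,(-5)%Z);
(8,2,9,(-5)%Z);
(8,2,10,(-6)%Z);
(8,2,11,(-5)%Z);
(8,2,13,(-5)%Z);
(8,2,14,(-8)%Z);
(8,2,15,(-5)%Z);
(8,2,16,(-8)%Z);
(8,4,6,(-4)%Z);
(8,4,9,(-5)%Z);
(8,4,10,(-6)%Z);
(8,4,12,(-6)%Z);
(8,4,13,(-7)%Z);
(8,4,14,(-6)%Z);
(8,4,15,(-7)%Z);
(8,4,16,(-6)%Z);
(8,5,8,(-4)%Z);
(8,5,10,(-4)%Z);
(8,5,12,(-4)%Z);
(8,5,14,(-4)%Z);
(8,5,15,(-7)%Z);
(8,5,16,(-4)%Z);
(8,8,5,(-3)%Z);
(8,8,9,(-5)%Z);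
(8,8,11,(-5)%Z);
(8,8,12,(-6)%Z);
(8,8,13,(-5)%Z);
(8,8,14,(-8)%Z);
(8,8,15,(-5)%Z);
(8,8,16,(-8)%Z);
(8,9,8,(-4)%Z);
(8,9,11,(-5)%Z);
(8,9,12,(-6)%Z);
(8,9,14,(-6)%Z);
(8,9,15,(-7)%Z);
(8,9,16,(-6)%Z);
(8,10,7,(-3)%Z);
(8,10,9,(-3)%Z);
(8,10,11,(-3)%Z);
(8,10,13,(-3)%Z);
(8,10,14,(-6)%Z);
(8,10,15,(-3)%Z);
(8,10,16,(-6)%Z);
(8,16,10,(-6)%Z);
(8,16,11,(-7)%Z);
(8,16,12,(-6)%Z);
(8,16,13,(-7)%Z);
(8,16,14,(-6)%Z);
(8,16,15,(-7)%Z);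
(8,16,16,(-6)%Z);
(8,17,8,(-4)%Z);
(8,17,10,(-4)%Z);
(8,17,11,(-5)%Z);
(8,17,12,(-4)%Z);
(8,17,14,(-4)%Z);
(8,17,15,(-7)%Z);
(8,17,16,(-4)%Z);
(8,18,7,(-3)%Z);
(8,18,10,(-4)%Z);
(8,18,11,(-5)%Z);
(8,18,13,(-5)%Z);
(8,18,14,(-6)%Z);
(8,18,15,(-5)%Z);
(8,18,16,(-6)%Z);
(8,20,6,(-2)%Z);
(8,20,10,(-4)%Z);
(8,20,12,(-4)%Z);
(8,20,13,(-5)%Z);
(8,20,14,(-4)%Z);
(8,20,15,(-7)%Z);
(8,20,16,(-4)%Z);
(8,21,8,(-2)%Z);
(8,21,10,(-2)%Z);
(8,21,12,(-2)%Z);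
(8,21,14,(-2)%Z);
(8,21,15,(-5)%Z);
(8,21,16,(-2)%Z);
(9,0,9,(-5)%Z);
(9,0,10,(-6)%Z);
(9,0,11,(-7)%Z);
(9,0,12,(-6)%Z);
(9,0,13,(-7)%Z);
(9,0,14,(-8)%Z);
(9,0,15,(-7)%Z);
(9,0,16,(-8)%Z);
(9,1,8,(-4)%Z);
(9,1,11,(-5)%Z);
(9,1,12,(-6)%Z);
(9,1,14,(-6)%Z);
(9,1,15,(-7)%Z);
(9,1,16,(-6)%Z);
(9,2,7,(-3)%Z);
(9,2,10,(-4)%Z);
(9,2,11,(-5)%Z);
(9,2,13,(-5)%Z);
(9,2,14,(-6)%Z);
(9,2,15,(-5)%Z);
(9,2,16,(-6)%Z);
(9,4,6,(-2)%Z);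
(9,4,9,(-3)%Z);
(9,4,10,(-4)%Z);
(9,4,12,(-4)%Z);
(9,4,13,(-5)%Z);
(9,4,14,(-6)%Z);
(9,4,15,(-5)%Z);
(9,4,16,(-6)%Z);
(9,5,12,(-4)%Z);
(9,5,14,(-4)%Z);
(9,5,15,(-5)%Z);
(9,5,16,(-4)%Z);
(9,8,9,(-3)%Z);
(9,8,11,(-5)%Z);
(9,8,12,(-4)%Z);
(9,8,13,(-5)%Z);
(9,8,14,(-6)%Z);
(9,8,15,(-5)%Z);
(9,8,16,(-6)%Z);
(9,9,5,(-1)%Z);
(9,9,8,(-2)%Z);
(9,9,11,(-3)%Z);
(9,9,12,(-4)%Z);
(9,9,14,(-4)%Z);
(9,9,15,(-5)%Z);
(9,9,16,(-6)%Z);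
(9,10,11,(-3)%Z);
(9,10,13,(-3)%Z);
(9,10,14,(-4)%Z);
(9,10,15,(-3)%Z);
(9,10,16,(-4)%Z);
(9,16,10,(-4)%Z);
(9,16,11,(-5)%Z);
(9,16,12,(-6)%Z);
(9,16,13,(-5)%Z);
(9,16,14,(-6)%Z);
(9,16,15,(-7)%Z);
(9,16,16,(-6)%Z);
(9,17,8,(-2)%Z);
(9,17,11,(-3)%Z);
(9,17,12,(-4)%Z);
(9,17,14,(-4)%Z);
(9,17,15,(-5)%Z);
(9,17,16,(-4)%Z);
(9,18,7,(-1)%Z);
(9,18,10,(-2)%Z);
(9,18,11,(-3)%Z);
(9,18,13,(-3)%Z);
(9,18,14,(-4)%Z);
(9,18,15,(-5)%Z);
(9,18,16,(-4)%Z);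
(9,20,10,(-2)%Z);
(9,20,12,(-4)%Z);
(9,20,13,(-3)%Z);
(9,20,14,(-4)%Z);
(9,20,15,(-5)%Z);
(9,20,16,(-4)%Z);
(9,21,12,(-2)%Z);
(9,21,14,(-2)%Z);
(9,21,15,(-3)%Z);
(9,21,16,(-2)%Z);
(10,0,9,(-5)%Z);
(10,0,10,(-6)%Z);
(10,0,11,(-5)%Z);
(10,0,12,(-6)%Z);
(10,0,13,(-5)%Z);
(10,0,14,(-6)%Z);
(10,0,15,(-5)%Z);
(10,0,16,(-6)%Z);
(10,1,8,(-4)%Z);
(10,1,10,(-4)%Z);
(10,1,12,(-4)%Z);
(10,1,14,(-4)%Z);
(10,1,15,(-7)%Z);
(10,1,16,(-4)%Z);
(10,2,7,(-3)%Z);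
(10,2,9,(-3)%Z);
(10,2,11,(-3)%Z);
(10,2,13,(-3)%Z);
(10,2,14,(-6)%Z);
(10,2,15,(-3)%Z);
(10,2,16,(-6)%Z);
(10,4,10,(-4)%Z);
(10,4,12,(-4)%Z);
(10,4,13,(-5)%Z);
(10,4,14,(-4)%Z);
(10,4,15,(-5)%Z);
(10,4,16,(-4)%Z);
(10,5,6,(-2)%Z);
(10,5,8,(-2)%Z);
(10,5,10,(-2)%Z);
(10,5,12,(-2)%Z);
(10,5,14,(-2)%Z);
(10,5,15,(-7)%Z);
(10,5,16,(-2)%Z);
(10,8,9,(-3)%Z);
(10,8,11,(-3)%Z);
(10,8,12,(-6)%Z);
(10,8,13,(-3)%Z);
(10,8,14,(-6)%Z);
(10,8,15,(-3)%Z);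
(10,8,16,(-6)%Z);
(10,9,12,(-4)%Z);
(10,9,14,(-4)%Z);
(10,9,15,(-5)%Z);
(10,9,16,(-4)%Z);
(10,10,5,(-1)%Z);
(10,10,7,(-1)%Z);
(10,10,9,(-1)%Z);
(10,10,11,(-1)%Z);
(10,10,13,(-1)%Z);
(10,10,14,(-6)%Z);
(10,10,15,(-1)%Z);
(10,10,16,(-6)%Z);
(10,16,10,(-4)%Z);
(10,16,11,(-5)%Z);
(10,16,12,(-4)%Z);
(10,16,13,(-5)%Z);
(10,16,14,(-4)%Z);
(10,16,15,(-5)%Z);
(10,16,16,(-4)%Z);
(10,17,8,(-2)%Z);
(10,17,10,(-2)%Z);
(10,17,12,(-2)%Z);
(10,17,14,(-2)%Z);
(10,17,15,(-5)%Z);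
(10,17,16,(-2)%Z);
(10,18,11,(-3)%Z);
(10,18,13,(-3)%Z);
(10,18,14,(-4)%Z);
(10,18,15,(-3)%Z);
(10,18,16,(-4)%Z);
(10,20,10,(-2)%Z);
(10,20,12,(-2)%Z);
(10,20,13,(-5)%Z);
(10,20,14,(-2)%Z);
(10,20,15,(-5)%Z);
(10,20,16,(-2)%Z);
(10,21,6,(0)%Z);
(10,21,8,(0)%Z);
(10,21,10,(0)%Z);
(10,21,12,(0)%Z);
(10,21,14,(0)%Z);
(10,21,15,(-5)%Z);
(10,21,16,(0)%Z);
(16,0,10,(-8)%Z);
(16,0,11,(-9)%Z);
(16,0,12,(-8)%Z);
(16,0,13,(-9)%Z);
(16,0,14,(-8)%Z);
(16,0,15,(-9)%Z);
(16,0,16,(-8)%Z);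
(16,1,9,(-7)%Z);
(16,1,11,(-7)%Z);
(16,1,12,(-8)%Z);
(16,1,13,(-7)%Z);
(16,1,15,(-7)%Z);
(16,1,16,(-10)%Z);
(16,2,8,(-6)%Z);
(16,2,10,(-6)%Z);
(16,2,11,(-7)%Z);
(16,2,12,(-6)%Z);
(16,2,14,(-6)%Z);
(16,2,15,(-9)%Z);
(16,2,16,(-6)%Z);
(16,4,7,(-5)%Z);
(16,4,10,(-6)%Z);
(16,4,11,(-7)%Z);
(16,4,13,(-7)%Z);
(16,4,14,(-8)%Z);
(16,4,15,(-7)%Z);
(16,4,16,(-8)%Z);
(16,5,9,(-5)%Z);
(16,5,11,(-5)%Z);
(16,5,13,(-5)%Z);
(16,5,15,(-5)%Z);
(16,5,16,(-8)%Z);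
(16,8,6,(-4)%Z);
(16,8,10,(-6)%Z);
(16,8,12,(-6)%Z);
(16,8,13,(-7)%Z);
(16,8,14,(-6)%Z);
(16,8,15,(-9)%Z);
(16,8,16,(-6)%Z);
(16,9,9,(-5)%Z);
(16,9,12,(-6)%Z);
(16,9,13,(-7)%Z);
(16,9,15,(-7)%Z);
(16,9,16,(-8)%Z);
(16,10,8,(-4)%Z);
(16,10,10,(-4)%Z);
(16,10,12,(-4)%Z);
(16,10,14,(-4)%Z);
(16,10,15,(-7)%Z);
(16,10,16,(-4)%Z);
(16,16,5,(-3)%Z);
(16,16,11,(-7)%Z);
(16,16,12,(-8)%Z);
(16,16,13,(-7)%Z);
(16,16,14,(-8)%Z);
(16,16,15,(-7)%Z);
(16,16,16,(-8)%Z);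
(16,17,9,(-5)%Z);
(16,17,11,(-5)%Z);
(16,17,12,(-6)%Z);
(16,17,13,(-5)%Z);
(16,17,15,(-5)%Z);
(16,17,16,(-8)%Z);
(16,18,8,(-4)%Z);
(16,18,11,(-5)%Z);
(16,18,12,(-6)%Z);
(16,18,14,(-6)%Z);
(16,18,15,(-7)%Z);
(16,18,16,(-6)%Z);
(16,20,7,(-3)%Z);
(16,20,11,(-5)%Z);
(16,20,13,(-5)%Z);
(16,20,14,(-6)%Z);
(16,20,15,(-5)%Z);
(16,20,16,(-8)%Z);
(16,21,9,(-3)%Z);
(16,21,11,(-3)%Z);
(16,21,13,(-3)%Z);
(16,21,15,(-3)%Z);
(16,21,16,(-6)%Z);
(17,0,10,(-6)%Z);
(17,0,11,(-7)%Z);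
(17,0,12,(-6)%Z);
(17,0,13,(-7)%Z);
(17,0,14,(-6)%Z);
(17,0,15,(-7)%Z);
(17,0,16,(-6)%Z);
(17,1,9,(-5)%Z);
(17,1,11,(-5)%Z);
(17,1,12,(-6)%Z);
(17,1,13,(-5)%Z);
(17,1,15,(-5)%Z);
(17,1,16,(-8)%Z);
(17,2,8,(-4)%Z);
(17,2,10,(-4)%Z);
(17,2,11,(-5)%Z);
(17,2,12,(-4)%Z);
(17,2,14,(-4)%Z);
(17,2,15,(-7)%Z);
(17,2,16,(-4)%Z);
(17,4,7,(-3)%Z);
(17,4,10,(-4)%Z);
(17,4,11,(-5)%Z);
(17,4,13,(-5)%Z);
(17,4,14,(-6)%Z);
(17,4,15,(-5)%Z);
(17,4,16,(-6)%Z);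
(17,5,9,(-3)%Z);
(17,5,11,(-3)%Z);
(17,5,13,(-3)%Z);
(17,5,15,(-3)%Z);
(17,5,16,(-6)%Z);
(17,8,6,(-2)%Z);
(17,8,10,(-4)%Z);
(17,8,12,(-4)%Z);
(17,8,13,(-5)%Z);
(17,8,14,(-4)%Z);
(17,8,15,(-7)%Z);
(17,8,16,(-4)%Z);
(17,9,9,(-3)%Z);
(17,9,12,(-4)%Z);
(17,9,13,(-5)%Z);
(17,9,15,(-5)%Z);
(17,9,16,(-6)%Z);
(17,10,8,(-2)%Z);
(17,10,10,(-2)%Z);
(17,10,12,(-2)%Z);
(17,10,14,(-2)%Z);
(17,10,15,(-5)%Z);
(17,10,16,(-2)%Z);
(17,16,11,(-5)%Z);
(17,16,12,(-6)%Z);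
(17,16,13,(-5)%Z);
(17,16,14,(-6)%Z);
(17,16,15,(-5)%Z);
(17,16,16,(-6)%Z);
(17,17,5,(-1)%Z);
(17,17,9,(-3)%Z);
(17,17,11,(-3)%Z);
(17,17,12,(-4)%Z);
(17,17,13,(-3)%Z);
(17,17,15,(-3)%Z);
(17,17,16,(-6)%Z);
(17,18,8,(-2)%Z);
(17,18,11,(-3)%Z);
(17,18,12,(-4)%Z);
(17,18,14,(-4)%Z);
(17,18,15,(-5)%Z);
(17,18,16,(-4)%Z);
(17,20,7,(-1)%Z);
(17,20,11,(-3)%Z);
(17,20,13,(-3)%Z);
(17,20,14,(-4)%Z);
(17,20,15,(-3)%Z);
(17,20,16,(-6)%Z);
(17,21,9,(-1)%Z);
(17,21,11,(-1)%Z);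
(17,21,13,(-1)%Z);
(17,21,15,(-1)%Z);
(17,21,16,(-4)%Z);
(18,0,10,(-6)%Z);
(18,0,11,(-7)%Z);
(18,0,12,(-8)%Z);
(18,0,13,(-7)%Z);
(18,0,14,(-8)%Z);
(18,0,15,(-9)%Z);
(18,0,16,(-8)%Z);
(18,1,9,(-5)%Z);
(18,1,12,(-6)%Z);
(18,1,13,(-7)%Z);
(18,1,15,(-7)%Z);
(18,1,16,(-8)%Z);
(18,2,8,(-4)%Z);
(18,2,11,(-5)%Z);
(18,2,12,(-6)%Z);
(18,2,14,(-6)%Z);
(18,2,15,(-7)%Z);
(18,2,16,(-6)%Z);
(18,4,7,(-3)%Z);
(18,4,10,(-4)%Z);
(18,4,11,(-5)%Z);
(18,4,13,(-5)%Z);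
(18,4,14,(-6)%Z);
(18,4,15,(-7)%Z);
(18,4,16,(-6)%Z);
(18,5,13,(-5)%Z);
(18,5,15,(-5)%Z);
(18,5,16,(-6)%Z);
(18,8,10,(-4)%Z);
(18,8,12,(-6)%Z);
(18,8,13,(-5)%Z);
(18,8,14,(-6)%Z);
(18,8,15,(-7)%Z);
(18,8,16,(-6)%Z);
(18,9,6,(-2)%Z);
(18,9,9,(-3)%Z);
(18,9,12,(-4)%Z);
(18,9,13,(-5)%Z);
(18,9,15,(-5)%Z);
(18,9,16,(-6)%Z);
(18,10,12,(-4)%Z);
(18,10,14,(-4)%Z);
(18,10,15,(-5)%Z);
(18,10,16,(-4)%Z);
(18,16,11,(-5)%Z);
(18,16,12,(-6)%Z);
(18,16,13,(-7)%Z);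
(18,16,14,(-6)%Z);
(18,16,15,(-7)%Z);
(18,16,16,(-8)%Z);
(18,17,9,(-3)%Z);
(18,17,12,(-4)%Z);
(18,17,13,(-5)%Z);
(18,17,15,(-5)%Z);
(18,17,16,(-6)%Z);
(18,18,5,(-1)%Z);
(18,18,8,(-2)%Z);
(18,18,11,(-3)%Z);
(18,18,12,(-4)%Z);
(18,18,14,(-4)%Z);
(18,18,15,(-5)%Z);
(18,18,16,(-6)%Z);
(18,20,11,(-3)%Z);
(18,20,13,(-5)%Z);
(18,20,14,(-4)%Z);
(18,20,15,(-5)%Z);
(18,20,16,(-6)%Z);
(18,21,13,(-3)%Z);
(18,21,15,(-3)%Z);
(18,21,16,(-4)%Z);
(20,0,10,(-6)%Z);
(20,0,11,(-7)%Z);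
(20,0,12,(-6)%Z);
(20,0,13,(-7)%Z);
(20,0,14,(-6)%Z);
(20,0,15,(-7)%Z);
(20,0,16,(-6)%Z);
(20,1,9,(-5)%Z);
(20,1,11,(-5)%Z);
(20,1,13,(-5)%Z);
(20,1,15,(-5)%Z);
(20,1,16,(-8)%Z);
(20,2,8,(-4)%Z);
(20,2,10,(-4)%Z);
(20,2,12,(-4)%Z);
(20,2,14,(-4)%Z);
(20,2,15,(-7)%Z);
(20,2,16,(-4)%Z);
(20,4,11,(-5)%Z);
(20,4,13,(-5)%Z);
(20,4,14,(-6)%Z);
(20,4,15,(-5)%Z);
(20,4,16,(-6)%Z);
(20,5,7,(-3)%Z);
(20,5,9,(-3)%Z);
(20,5,11,(-3)%Z);
(20,5,13,(-3)%Z);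
(20,5,15,(-3)%Z);
(20,5,16,(-8)%Z);
(20,8,10,(-4)%Z);
(20,8,12,(-4)%Z);
(20,8,13,(-7)%Z);
(20,8,14,(-4)%Z);
(20,8,15,(-7)%Z);
(20,8,16,(-4)%Z);
(20,9,13,(-5)%Z);
(20,9,15,(-5)%Z);
(20,9,16,(-6)%Z);
(20,10,6,(-2)%Z);
(20,10,8,(-2)%Z);
(20,10,10,(-2)%Z);
(20,10,12,(-2)%Z);
(20,10,14,(-2)%Z);
(20,10,15,(-7)%Z);
(20,10,16,(-2)%Z);
(20,16,11,(-5)%Z);
(20,16,12,(-6)%Z);
(20,16,13,(-5)%Z);
(20,16,14,(-6)%Z);
(20,16,15,(-5)%Z);
(20,16,16,(-6)%Z);
(20,17,9,(-3)%Z);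
(20,17,11,(-3)%Z);
(20,17,13,(-3)%Z);
(20,17,15,(-3)%Z);
(20,17,16,(-6)%Z);
(20,18,12,(-4)%Z);
(20,18,14,(-4)%Z);
(20,18,15,(-5)%Z);
(20,18,16,(-4)%Z);
(20,20,5,(-1)%Z);
(20,20,11,(-3)%Z);
(20,20,13,(-3)%Z);
(20,20,14,(-6)%Z);
(20,20,15,(-3)%Z);
(20,20,16,(-6)%Z);
(20,21,7,(-1)%Z);
(20,21,9,(-1)%Z);
(20,21,11,(-1)%Z);
(20,21,13,(-1)%Z);
(20,21,15,(-1)%Z);
(20,21,16,(-6)%Z);
(21,0,10,(-4)%Z);
(21,0,11,(-5)%Z);
(21,0,12,(-4)%Z);
(21,0,13,(-5)%Z);
(21,0,14,(-4)%Z);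
(21,0,15,(-5)%Z);
(21,0,16,(-4)%Z);
(21,1,9,(-3)%Z);
(21,1,11,(-3)%Z);
(21,1,13,(-3)%Z);
(21,1,15,(-3)%Z);
(21,1,16,(-6)%Z);
(21,2,8,(-2)%Z);
(21,2,10,(-2)%Z);
(21,2,12,(-2)%Z);
(21,2,14,(-2)%Z);
(21,2,15,(-5)%Z);
(21,2,16,(-2)%Z);
(21,4,11,(-3)%Z);
(21,4,13,(-3)%Z);
(21,4,14,(-4)%Z);
(21,4,15,(-3)%Z);
(21,4,16,(-4)%Z);
(21,5,7,(-1)%Z);
(21,5,9,(-1)%Z);
(21,5,11,(-1)%Z);
(21,5,13,(-1)%Z);
(21,5,15,(-1)%Z);
(21,5,16,(-6)%Z);
(21,8,10,(-2)%Z);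
(21,8,12,(-2)%Z);
(21,8,13,(-5)%Z);
(21,8,14,(-2)%Z);
(21,8,15,(-5)%Z);
(21,8,16,(-2)%Z);
(21,9,13,(-3)%Z);
(21,9,15,(-3)%Z);
(21,9,16,(-4)%Z);
(21,10,6,(0)%Z);
(21,10,8,(0)%Z);
(21,10,10,(0)%Z);
(21,10,12,(0)%Z);
(21,10,14,(0)%Z);
(21,10,15,(-5)%Z);
(21,10,16,(0)%Z);
(21,16,11,(-3)%Z);
(21,16,12,(-4)%Z);
(21,16,13,(-3)%Z);
(21,16,14,(-4)%Z);
(21,16,15,(-3)%Z);
(21,16,16,(-4)%Z);
(21,17,9,(-1)%Z);
(21,17,11,(-1)%Z);
(21,17,13,(-1)%Z);
(21,17,15,(-1)%Z);
(21,17,16,(-4)%Z);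
(21,18,12,(-2)%Z);
(21,18,14,(-2)%Z);
(21,18,15,(-3)%Z);
(21,18,16,(-2)%Z);
(21,20,11,(-1)%Z);
(21,20,13,(-1)%Z);
(21,20,14,(-4)%Z);
(21,20,15,(-1)%Z);
(21,20,16,(-4)%Z);
(21,21,5,(1)%Z);
(21,21,7,(1)%Z);
(21,21,9,(1)%Z);
(21,21,11,(1)%Z);
(21,21,13,(1)%Z);
(21,21,15,(1)%Z);
(21,21,16,(-4)%Z)].
Fixpoint look (F L s : nat) (t : list (nat*nat*nat*Z)) : option Z :=
  match t with
  | [] => None
  | (F',L',s',v) :: t' => if (F =? F') && (L =? L') && (s =? s') then Some v else look F L s t'
  end.

Lemma look_in F L s t v : look F L s t = Some v -> In (F,L,s,v) t.
Proof.
  induction t as [|[[[F' L'] s'] w] t IH]; simpl; [discriminate|].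
  destruct ((F =? F') && (L =? L') && (s =? s')) eqn:E.
  - intros H; inversion H; subst. left.
    apply andb_prop in E as [E1 E3]; apply andb_prop in E1 as [E1 E2].
    apply Nat.eqb_eq in E1, E2, E3; subst; reflexivity.
  - intros H; right; auto.
Qed.

Arguments look F L s t : simpl never.
Definition nxt s := if s <? 14 then S s else if s =? 15 then 16 else 15.
Definition okb (L:nat) (c:bool) := negb (c && (Nat.odd L || (16 <=? L))).
Definition step L (c:bool) := L / 2 + (if c then 16 else 0).
Definition compat F L := forallb (fun j => negb (Nat.testbit F j && Nat.testbit L j)) [0;1;2;3;4].

Definition chk_trans : bool :=
  forallb (fun '(F,L,s,v) =>
    forallb (fun c => if okb L c then
       match look F (step L c) (nxt s) tbl with
       | Some v' => (v + (if c then 1 else -1) <=? v')%Z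
       | None => false end else true) [true;false]) tbl.

Definition chk_final : bool :=
  forallb (fun '(F,L,s,v) => if (s =? 15) && compat F L then (v <=? -4)%Z else true) tbl.

Lemma chk_trans_ok : chk_trans = true. Proof. vm_compute. reflexivity. Qed.
Lemma chk_final_ok : chk_final = true. Proof. vm_compute. reflexivity. Qed.
Definition b2 (c:bool) : nat := if c then 1 else 0.
Definition code5 (b:nat->bool) y :=
  b2 (b y) + 2*b2 (b (y+1)) + 4*b2 (b (y+2)) + 8*b2 (b (y+3)) + 16*b2 (b (y+4)).
Fixpoint cnt (b:nat->bool) n := match n with 0 => 0 | S n => cnt b n + b2 (b n) end.
Definition stage x := if x <? 15 then x else if Nat.odd x then 15 else 16.
Definition lvalid (b:nat->bool) x := forall y, y < x -> b y = true ->
  (1 <= y -> b (y-1) = false) /\ (5 <= y -> b (y-5) = false).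

Lemma code5_step b y : code5 b (y+1) = step (code5 b y) (b (y+5)).
Proof.
  unfold code5, step.
  replace (y+1+1) with (y+2) by lia. replace (y+1+2) with (y+3) by lia.
  replace (y+1+3) with (y+4) by lia. replace (y+1+4) with (y+5) by lia.
  destruct (b y), (b (y+1)), (b (y+2)), (b (y+3)), (b (y+4)), (b (y+5)); reflexivity.
Qed.

Lemma code5_odd b y : Nat.odd (code5 b y) = b y.
Proof. unfold code5. destruct (b y), (b (y+1)), (b (y+2)), (b (y+3)), (b (y+4)); reflexivity. Qed.

Lemma code5_hi b y : (16 <=? code5 b y) = b (y+4).
Proof. unfold code5. destruct (b y), (b (y+1)), (b (y+2)), (b (y+3)), (b (y+4)); reflexivity. Qed.

Lemma code5_bit b y j : j < 5 -> Nat.testbit (code5 b y) j = b (y+j).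
Proof.
  intros Hj. unfold code5.
  assert (j = 0 \/ j = 1 \/ j = 2 \/ j = 3 \/ j = 4) as HH by lia.
  destruct HH as [->|[->|[->|[->| ->]]]]; rewrite ?Nat.add_0_r;
  destruct (b y), (b (y+1)), (b (y+2)), (b (y+3)), (b (y+4)); reflexivity.
Qed.

Lemma stage_S x : 5 <= x -> stage (S x) = nxt (stage x).
Proof.
  intros H. unfold stage, nxt.
  destruct (x <? 15) eqn:E1.
  - apply Nat.ltb_lt in E1.
    destruct (S x <? 15) eqn:E2.
    + apply Nat.ltb_lt in E2. replace (x <? 14) with true by (symmetry; apply Nat.ltb_lt; lia). reflexivity.
    + apply Nat.ltb_ge in E2. assert (x = 14) by lia. subst. reflexivity.
  - apply Nat.ltb_ge in E1.
    replace (S x <? 15) with false by (symmetry; apply Nat.ltb_ge; lia).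
    rewrite Nat.odd_succ, <- Nat.negb_odd.
    destruct (Nat.odd x); reflexivity.
Qed.

Lemma lvalid_mono b x y : y <= x -> lvalid b x -> lvalid b y.
Proof. intros H Hv z Hz. apply Hv. lia. Qed.

Lemma inv b : forall m, lvalid b (5+m) ->
  exists v, look (code5 b 0) (code5 b m) (stage (5+m)) tbl = Some v /\
    (2 * Z.of_nat (cnt b (5+m)) - Z.of_nat (5+m) <= v)%Z.
Proof.
  induction m as [|m IH]; intros Hv.
  - unfold lvalid in Hv.
    assert (H1 : b 1 = true -> b 0 = false) by (intro h; apply (proj1 (Hv 1 ltac:(lia) h)); lia).
    assert (H2 : b 2 = true -> b 1 = false) by (intro h; apply (proj1 (Hv 2 ltac:(lia) h)); lia).
    assert (H3 : b 3 = true -> b 2 = false) by (intro h; apply (proj1 (Hv 3 ltac:(lia) h)); lia).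
    assert (H4 : b 4 = true -> b 3 = false) by (intro h; apply (proj1 (Hv 4 ltac:(lia) h)); lia).
    clear Hv. unfold code5. cbn [cnt Nat.add].
    destruct (b 0), (b 1), (b 2), (b 3), (b 4);
      try (discriminate (H1 eq_refl)); try (discriminate (H2 eq_refl));
      try (discriminate (H3 eq_refl)); try (discriminate (H4 eq_refl));
      lazymatch goal with |- exists v, look ?a ?b ?c tbl = Some v /\ _ =>
        let r := eval vm_compute in (look a b c tbl) in
        match r with Some ?w => exists w end end;
      (split; [vm_compute; reflexivity| cbn; lia]).
  - destruct (IH (lvalid_mono b (5+S m) (5+m) ltac:(lia) Hv)) as [v [Hl Hc]].
    assert (Hok : okb (code5 b m) (b (m+5)) = true).
    { unfold okb. rewrite code5_odd, code5_hi.
      destruct (b (m+5)) eqn:Eb; [|reflexivity].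
      destruct (Hv (m+5) ltac:(lia) Eb) as [Ha Hb].
      replace (m+4) with (m+5-1) by lia. rewrite Ha by lia.
      replace m with (m+5-5) at 1 by lia. rewrite Hb by lia. reflexivity. }
    pose proof chk_trans_ok as Ck. unfold chk_trans in Ck.
    rewrite forallb_forall in Ck. specialize (Ck _ (look_in _ _ _ _ _ Hl)).
    cbn [forallb] in Ck. rewrite andb_true_r in Ck. apply andb_prop in Ck as [Ct Cf].
    replace (5 + S m) with (S (5+m)) by lia.
    rewrite stage_S by lia.
    replace (S m) with (m+1) by lia. rewrite code5_step.
    change (cnt b (S (5+m))) with (cnt b (5+m) + b2 (b (5+m))). replace (5+m) with (m+5) in * by lia.
    destruct (b (m+5)) eqn:Eb.
    + rewrite Hok in Ct.
      revert Ct; destruct (look (code5 b 0) (step (code5 b m) true) (nxt (stage (m + 5))) tbl) as [v'|] eqn:El; intro Ct; [|cbn in Ct; discriminate Ct].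
      exists v'; split; [reflexivity|]. apply Z.leb_le in Ct. simpl b2. lia.
    + rewrite Hok in Cf.
      revert Cf; destruct (look (code5 b 0) (step (code5 b m) false) (nxt (stage (m + 5))) tbl) as [v'|] eqn:El; intro Cf; [|cbn in Cf; discriminate Cf].
      exists v'; split; [reflexivity|]. apply Z.leb_le in Cf. simpl b2. lia.
Qed.

Lemma window b i : 5 <= i -> lvalid b (2*i+5) ->
  (forall j, j < 5 -> b j = true -> b (2*i+j) = false) ->
  cnt b (2*i+5) <= i.
Proof.
  intros Hi Hv Hc.
  replace (2*i+5) with (5 + 2*i) in Hv |- * by lia.
  destruct (inv b (2*i) Hv) as [v [Hl Hle]].
  pose proof chk_final_ok as Ck. unfold chk_final in Ck.
  rewrite forallb_forall in Ck. specialize (Ck _ (look_in _ _ _ _ _ Hl)).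
  assert (Hs : stage (5 + 2*i) = 15).
  { unfold stage. replace (5+2*i <? 15) with false by (symmetry; apply Nat.ltb_ge; lia).
    replace (5 + 2*i) with (1 + 2*(i+2)) by lia. rewrite Nat.odd_add_mul_2. reflexivity. }
  rewrite Hs in Ck. cbn [Nat.eqb andb] in Ck.
  assert (Hcp : compat (code5 b 0) (code5 b (2*i)) = true).
  { unfold compat. cbn [forallb].
    rewrite !code5_bit by lia. rewrite !Nat.add_0_l.
    pose proof (Hc 0 ltac:(lia)) as c0; pose proof (Hc 1 ltac:(lia)) as c1; pose proof (Hc 2 ltac:(lia)) as c2;
    pose proof (Hc 3 ltac:(lia)) as c3; pose proof (Hc 4 ltac:(lia)) as c4.
    rewrite Nat.add_0_r in c0 |- *.
    destruct (b 0), (b 1), (b 2), (b 3), (b 4); cbn [negb andb];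
    rewrite ?(c0 eq_refl), ?(c1 eq_refl), ?(c2 eq_refl), ?(c3 eq_refl), ?(c4 eq_refl); reflexivity. }
  rewrite Hcp in Ck. apply Z.leb_le in Ck. lia.
Qed.
Definition bA (A : Z -> Prop) (a : Z) : nat -> bool :=
  fun k => if excluded_middle_informative (A (a + Z.of_nat k)%Z) then true else false.

Lemma bA_true A a k : bA A a k = true <-> A (a + Z.of_nat k)%Z.
Proof. unfold bA. destruct (excluded_middle_informative _); split; auto; discriminate. Qed.

Lemma cnt_ext b b' n : (forall k, k < n -> b k = b' k) -> cnt b n = cnt b' n.
Proof.
  induction n; simpl; intros H; [reflexivity|].
  rewrite IHn by (intros; apply H; lia). rewrite H by lia. reflexivity.
Qed.

Lemma cnt_add b m n : cnt b (m+n) = cnt b m + cnt (fun k => b (m+k)) n.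
Proof.
  induction n as [|n IH]; [rewrite Nat.add_0_r; simpl; lia|]. rewrite Nat.add_succ_r. simpl. rewrite IH. lia.
Qed.

Lemma cnt_le b n : cnt b n <= n.
Proof. induction n; simpl; [lia|]. destruct (b n); simpl; lia. Qed.

Lemma bA_shift A a m k : bA A a (m + k) = bA A (a + Z.of_nat m)%Z k.
Proof.
  unfold bA. replace (a + Z.of_nat (m+k))%Z with (a + Z.of_nat m + Z.of_nat k)%Z by lia.
  reflexivity.
Qed.

Lemma cntA_add A a m n :
  cnt (bA A a) (m+n) = cnt (bA A a) m + cnt (bA A (a + Z.of_nat m)%Z) n.
Proof.
  rewrite cnt_add. f_equal. apply cnt_ext. intros. apply bA_shift.
Qed.

Lemma window_A (i : Z) A a : (5 <= i)%Z ->
  independent (1%Z :: 5%Z :: (2 * i)%Z :: nil) A ->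
  cnt (bA A a) (2 * Z.to_nat i + 5) <= Z.to_nat i.
Proof.
  intros Hi HA. apply window; [lia| |].
  - intros y Hy Hb. apply bA_true in Hb. split; intros Hy'; apply Bool.not_true_iff_false;
      intros Hb'; apply bA_true in Hb'; apply (HA _ _ Hb Hb').
    + replace (Z.abs (a + Z.of_nat y - (a + Z.of_nat (y - 1))))%Z with 1%Z by lia. simpl; auto.
    + replace (Z.abs (a + Z.of_nat y - (a + Z.of_nat (y - 5))))%Z with 5%Z by lia. simpl; auto.
  - intros j Hj Hb. apply Bool.not_true_iff_false; intros Hb'.
    apply bA_true in Hb; apply bA_true in Hb'. apply (HA _ _ Hb' Hb).
    replace (Z.abs (a + Z.of_nat (2 * Z.to_nat i + j) - (a + Z.of_nat j)))%Z with (2*i)%Z by lia.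
    simpl; auto.
Qed.

Lemma windows_A (i : Z) A : (5 <= i)%Z ->
  independent (1%Z :: 5%Z :: (2 * i)%Z :: nil) A ->
  forall q r a, cnt (bA A a) (q * (2 * Z.to_nat i + 5) + r) <= q * Z.to_nat i + r.
Proof.
  intros Hi HA q. induction q; intros r a.
  - simpl. apply cnt_le.
  - replace (S q * (2 * Z.to_nat i + 5) + r) with ((2 * Z.to_nat i + 5) + (q * (2 * Z.to_nat i + 5) + r)) by lia.
    rewrite cntA_add. pose proof (window_A i A a Hi HA). specialize (IHq r (a + Z.of_nat (2 * Z.to_nat i + 5))%Z). lia.
Qed.

Lemma count_sym_cnt A N :
  count_sym A N = INR (cnt (bA A (- Z.of_nat N)%Z) (S (2 * N))).
Proof.
  unfold count_sym. generalize (2 * N). intros n. induction n.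
  - simpl. unfold indic, bA. replace (- Z.of_nat N + Z.of_nat 0)%Z with (Z.of_nat 0 - Z.of_nat N)%Z by lia.
    destruct (excluded_middle_informative _); simpl; lra.
  - rewrite tech5, IHn. change (cnt (bA A (- Z.of_nat N)%Z) (S (S n))) with
      (cnt (bA A (- Z.of_nat N)%Z) (S n) + b2 (bA A (- Z.of_nat N)%Z (S n))).
    rewrite plus_INR. f_equal. unfold indic, bA.
    replace (- Z.of_nat N + Z.of_nat (S n))%Z with (Z.of_nat (S n) - Z.of_nat N)%Z by lia.
    destruct (excluded_middle_informative _); simpl; lra.
Qed.
Definition A0 (i : Z) (x : Z) : Prop :=
  exists m, (x mod (2*i+5) = 2*m /\ 0 <= m < i)%Z.

Lemma A0_indep (i : Z) : (5 <= i)%Z -> independent (1%Z :: 5%Z :: (2 * i)%Z :: nil) (A0 i).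
Proof.
  intros Hi x y [m1 [H1 H1']] [m2 [H2 H2']] Hin.
  assert (Hp : (2*i+5 <> 0)%Z) by lia.
  pose proof (Z.div_mod x (2*i+5) Hp) as Dx.
  pose proof (Z.div_mod y (2*i+5) Hp) as Dy.
  set (q1 := (x / (2*i+5))%Z) in *. set (q2 := (y / (2*i+5))%Z) in *.
  rewrite H1 in Dx. rewrite H2 in Dy.
  assert (Hxy : (x - y = (2*i+5)*(q1-q2) + 2*(m1-m2))%Z) by lia.
  clearbody q1 q2. clear H1 H2 Dx Dy.
  cbn [In] in Hin.
  destruct (Z_le_gt_dec (q1-q2) (-2)) as [T|T];
  [|destruct (Z.eq_dec (q1-q2) (-1)) as [T1|T1];
  [|destruct (Z.eq_dec (q1-q2) 0) as [T2|T2];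
  [|destruct (Z.eq_dec (q1-q2) 1) as [T3|T3]]]].
  - assert ((2*i+5)*(q1-q2) <= (2*i+5)*(-2))%Z by (apply Z.mul_le_mono_nonneg_l; lia).
    set (K := ((2*i+5)*(q1-q2))%Z) in *. clearbody K. lia.
  - rewrite T1 in Hxy. lia.
  - rewrite T2 in Hxy. lia.
  - rewrite T3 in Hxy. lia.
  - assert ((2*i+5)*2 <= (2*i+5)*(q1-q2))%Z by (apply Z.mul_le_mono_nonneg_l; lia).
    set (K := ((2*i+5)*(q1-q2))%Z) in *. clearbody K. lia.
Qed.

Lemma A0_per (i : Z) x : (5 <= i)%Z -> (A0 i (x + (2*i+5)) <-> A0 i x).
Proof.
  intros Hi. unfold A0.
  replace ((x + (2*i+5)) mod (2*i+5))%Z with (x mod (2*i+5))%Z. reflexivity.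
  replace (x + (2*i+5))%Z with (x + 1*(2*i+5))%Z by lia. rewrite Z.mod_add by lia. reflexivity.
Qed.

Lemma A0_shift1 (i : Z) a : (5 <= i)%Z ->
  cnt (bA (A0 i) (a+1)%Z) (2 * Z.to_nat i + 5) = cnt (bA (A0 i) a) (2 * Z.to_nat i + 5).
Proof.
  intros Hi.
  pose proof (cntA_add (A0 i) a 1 (2 * Z.to_nat i + 5)) as E1.
  pose proof (cntA_add (A0 i) a (2 * Z.to_nat i + 5) 1) as E2.
  rewrite Nat.add_comm in E1. rewrite E1 in E2.
  assert (cnt (bA (A0 i) (a + Z.of_nat (2 * Z.to_nat i + 5))%Z) 1 = cnt (bA (A0 i) a) 1).
  { change (cnt ?b 1) with (0 + b2 (b 0)). f_equal. f_equal.
    destruct (bA (A0 i) a 0) eqn:Ea.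
    - apply (proj1 (bA_true (A0 i) a 0)) in Ea. apply (proj2 (bA_true (A0 i) _ 0)).
      replace (a + Z.of_nat (2 * Z.to_nat i + 5) + Z.of_nat 0)%Z with ((a + Z.of_nat 0) + (2*i+5))%Z by lia.
      apply (proj2 (A0_per i _ Hi)); exact Ea.
    - apply Bool.not_true_iff_false. intros Hb. apply (proj1 (bA_true (A0 i) _ 0)) in Hb.
      apply Bool.not_true_iff_false in Ea. apply Ea. apply (proj2 (bA_true (A0 i) a 0)).
      replace (a + Z.of_nat (2 * Z.to_nat i + 5) + Z.of_nat 0)%Z with ((a + Z.of_nat 0) + (2*i+5))%Z in Hb by lia.
      apply (proj1 (A0_per i _ Hi)); exact Hb. }
  replace (a + Z.of_nat 1)%Z with (a+1)%Z in E2 by lia. lia.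
Qed.

Lemma A0_const (i : Z) a : (5 <= i)%Z ->
  cnt (bA (A0 i) a) (2 * Z.to_nat i + 5) = cnt (bA (A0 i) 0%Z) (2 * Z.to_nat i + 5).
Proof.
  intros Hi.
  assert (G : forall k : nat, forall a, cnt (bA (A0 i) (a + Z.of_nat k)%Z) (2 * Z.to_nat i + 5) = cnt (bA (A0 i) a) (2 * Z.to_nat i + 5)).
  { induction k; intros a'. { rewrite Z.add_0_r. reflexivity. }
    replace (a' + Z.of_nat (S k))%Z with ((a' + Z.of_nat k) + 1)%Z by lia.
    rewrite A0_shift1 by lia. apply IHk. }
  destruct (Z_le_gt_dec 0 a).
  - rewrite <- (G (Z.to_nat a) 0%Z). f_equal. f_equal. lia.
  - rewrite <- (G (Z.to_nat (-a)) a). f_equal. f_equal. lia.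
Qed.

Lemma A0_zero (i : Z) : (5 <= i)%Z -> cnt (bA (A0 i) 0%Z) (2 * Z.to_nat i + 5) = Z.to_nat i.
Proof.
  intros Hi. set (n := Z.to_nat i).
  assert (Hn : Z.of_nat n = i) by (unfold n; lia).
  assert (Bev : forall m, m < n -> bA (A0 i) 0%Z (2*m) = true).
  { intros m Hm. apply bA_true. exists (Z.of_nat m). split; [|lia].
    rewrite Z.mod_small by lia. lia. }
  assert (Bodd : forall k, k < 2*n+5 -> (forall m, k <> 2*m \/ n <= m) -> bA (A0 i) 0%Z k = false).
  { intros k Hk Hm. apply Bool.not_true_iff_false. intros Hb. apply bA_true in Hb.
    destruct Hb as [m [E Hm']]. rewrite Z.mod_small in E by lia.
    destruct (Hm (Z.to_nat m)) as [C|C]; lia. }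
  assert (Hc : forall m, m <= n -> cnt (bA (A0 i) 0%Z) (2*m) = m).
  { induction m; intros Hm; [reflexivity|].
    replace (2 * S m) with (S (S (2*m))) by lia. cbn [cnt].
    rewrite IHm by lia. rewrite Bev by lia.
    rewrite (Bodd (S (2*m))) by (lia || (intros m'; left; lia)). simpl. lia. }
  replace (2*n+5) with (S (S (S (S (S (2*n)))))) by lia. cbn [cnt].
  rewrite Hc by lia.
  repeat (rewrite Bodd; [| lia | intros m'; destruct (le_lt_dec n m'); [right; lia | left; lia]]).
  simpl. lia.
Qed.

Lemma A0_win (i : Z) a : (5 <= i)%Z -> cnt (bA (A0 i) a) (2 * Z.to_nat i + 5) = Z.to_nat i.
Proof. intros Hi. rewrite A0_const by lia. apply A0_zero, Hi. Qed.

Lemma A0_lower (i : Z) : (5 <= i)%Z ->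
  forall q r a, q * Z.to_nat i <= cnt (bA (A0 i) a) (q * (2 * Z.to_nat i + 5) + r).
Proof.
  intros Hi q. induction q; intros r a; [simpl; lia|].
  replace (S q * (2 * Z.to_nat i + 5) + r) with ((2 * Z.to_nat i + 5) + (q * (2 * Z.to_nat i + 5) + r)) by lia.
  rewrite cntA_add, A0_win by lia.
  specialize (IHq r (a + Z.of_nat (2 * Z.to_nat i + 5))%Z). lia.
Qed.
Local Open Scope R_scope.

Lemma frac_up c n P M : 0 < P -> 0 < M -> c * P <= n * M + P * P -> c / M <= n / P + P / M.
Proof.
  intros HP HM H.
  replace (n/P + P/M) with ((n*M + P*P) * / (P*M)) by (field; lra).
  replace (c/M) with ((c*P) * / (P*M)) by (field; lra).
  apply Rmult_le_compat_r; [apply Rlt_le, Rinv_0_lt_compat; nra| assumption].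
Qed.

Lemma frac_low c n P M : 0 < P -> 0 < M -> n * M <= c * P + P * P -> n / P - P / M <= c / M.
Proof.
  intros HP HM H.
  replace (n/P - P/M) with ((n*M - P*P) * / (P*M)) by (field; lra).
  replace (c/M) with ((c*P) * / (P*M)) by (field; lra).
  apply Rmult_le_compat_r; [apply Rlt_le, Rinv_0_lt_compat; nra| lra].
Qed.

Lemma lim_small (P : R) : is_lim_seq (fun N => P / INR (2 * N + 1)) 0.
Proof.
  assert (H1 : is_lim_seq (fun N => INR (2 * N + 1)) p_infty).
  { apply is_lim_seq_le_p_loc with (u := INR).
    - exists 0%nat. intros N _. apply le_INR. lia.
    - apply is_lim_seq_INR. }
  pose proof (is_lim_seq_inv _ _ H1 ltac:(discriminate)) as H2.
  pose proof (is_lim_seq_scal_l _ P _ H2) as H3.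
  simpl in H3. rewrite Rmult_0_r in H3.
  eapply is_lim_seq_ext; [|exact H3]. intros N. reflexivity.
Qed.

Lemma lim_pm (a P : R) :
  is_lim_seq (fun N => a + P / INR (2 * N + 1)) a /\
  is_lim_seq (fun N => a - P / INR (2 * N + 1)) a.
Proof.
  split.
  - pose proof (is_lim_seq_plus' _ _ a 0 (is_lim_seq_const a) (lim_small P)) as H.
    rewrite Rplus_0_r in H. exact H.
  - pose proof (is_lim_seq_minus' _ _ a 0 (is_lim_seq_const a) (lim_small P)) as H.
    rewrite Rminus_0_r in H. exact H.
Qed.

Lemma pos_M N : 0 < INR (2 * N + 1).
Proof. apply lt_0_INR. lia. Qed.

Lemma seq_up (i : Z) A N : (5 <= i)%Z ->
  independent (1%Z :: 5%Z :: (2 * i)%Z :: nil) A ->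
  count_sym A N / INR (2 * N + 1) <=
  INR (Z.to_nat i) / INR (2 * Z.to_nat i + 5) + INR (2 * Z.to_nat i + 5) / INR (2 * N + 1).
Proof.
  intros Hi HA. rewrite count_sym_cnt.
  set (n := Z.to_nat i). set (P := (2 * n + 5)%nat). set (M := (2 * N + 1)%nat).
  replace (S (2 * N)) with M by (unfold M; lia).
  apply frac_up; [apply lt_0_INR; unfold P; lia | apply pos_M |].
  rewrite <- !mult_INR, <- plus_INR. apply le_INR.
  pose proof (Nat.div_mod_eq M P) as HD. pose proof (Nat.mod_upper_bound M P ltac:(unfold P; lia)) as HR.
  set (q := (M / P)%nat) in *. set (r := (M mod P)%nat) in *.
  pose proof (windows_A i A Hi HA q r (- Z.of_nat N)%Z) as W. fold n in W. fold P in W.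
  rewrite (Nat.mul_comm q P) in W. rewrite <- HD in W.
  assert (n <= P)%nat by (unfold P; lia).
  set (c := cnt _ M) in *. clearbody c q r.
  rewrite HD. nia.
Qed.

Lemma seq_A0 (i : Z) N : (5 <= i)%Z ->
  INR (Z.to_nat i) / INR (2 * Z.to_nat i + 5) - INR (2 * Z.to_nat i + 5) / INR (2 * N + 1) <=
  count_sym (A0 i) N / INR (2 * N + 1) <=
  INR (Z.to_nat i) / INR (2 * Z.to_nat i + 5) + INR (2 * Z.to_nat i + 5) / INR (2 * N + 1).
Proof.
  intros Hi. split; [|apply seq_up; [exact Hi | apply A0_indep, Hi]].
  rewrite count_sym_cnt.
  set (n := Z.to_nat i). set (P := (2 * n + 5)%nat). set (M := (2 * N + 1)%nat).
  replace (S (2 * N)) with M by (unfold M; lia).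
  apply frac_low; [apply lt_0_INR; unfold P; lia | apply pos_M |].
  rewrite <- !mult_INR, <- plus_INR. apply le_INR.
  pose proof (Nat.div_mod_eq M P) as HD. pose proof (Nat.mod_upper_bound M P ltac:(unfold P; lia)) as HR.
  set (q := (M / P)%nat) in *. set (r := (M mod P)%nat) in *.
  pose proof (A0_lower i Hi q r (- Z.of_nat N)%Z) as W. fold n in W. fold P in W.
  rewrite (Nat.mul_comm q P) in W. rewrite <- HD in W.
  assert (n <= P)%nat by (unfold P; lia).
  set (c := cnt _ M) in *. clearbody c q r.
  rewrite HD. nia.
Qed.

Lemma density_up (i : Z) A : (5 <= i)%Z ->
  independent (1%Z :: 5%Z :: (2 * i)%Z :: nil) A ->
  Rbar_le (density A) (INR (Z.to_nat i) / INR (2 * Z.to_nat i + 5)).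
Proof.
  intros Hi HA. unfold density.
  set (a := INR (Z.to_nat i) / INR (2 * Z.to_nat i + 5)).
  set (P := INR (2 * Z.to_nat i + 5)).
  replace (Finite a) with (LimSup_seq (fun N => a + P / INR (2 * N + 1))).
  - apply LimSup_le. exists 0%nat. intros N _.
    replace (INR (2 * N + 1)) with (INR (2 * N + 1)) by reflexivity.
    apply seq_up; assumption.
  - apply is_LimSup_seq_unique, is_lim_LimSup_seq, (proj1 (lim_pm a P)).
Qed.

Lemma density_A0 (i : Z) : (5 <= i)%Z ->
  density (A0 i) = Finite (INR (Z.to_nat i) / INR (2 * Z.to_nat i + 5)).
Proof.
  intros Hi. unfold density.
  apply is_LimSup_seq_unique, is_lim_LimSup_seq.
  set (a := INR (Z.to_nat i) / INR (2 * Z.to_nat i + 5)).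
  set (P := INR (2 * Z.to_nat i + 5)).
  apply is_lim_seq_le_le with (u := fun N => a - P / INR (2 * N + 1))
                             (w := fun N => a + P / INR (2 * N + 1)).
  - intros N. apply seq_A0, Hi.
  - apply (proj2 (lim_pm a P)).
  - apply (proj1 (lim_pm a P)).
Qed.

Theorem theorem28 (i : Z) (hi : (5 <= i)%Z) :
  indep_ratio (1%Z :: 5%Z :: (2 * i)%Z :: nil) =
  Finite (IZR i / IZR (2 * i + 5)).
Proof.
  assert (E : IZR i / IZR (2 * i + 5) = INR (Z.to_nat i) / INR (2 * Z.to_nat i + 5)).
  { rewrite !INR_IZR_INZ. f_equal; f_equal; lia. }
  rewrite E. unfold indep_ratio. apply is_lub_Rbar_unique. split.
  - intros d [A [HA Hd]]. pose proof (density_up i A hi HA) as H. rewrite Hd in H. exact H.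
  - intros b Hb. apply Hb. exists (A0 i). split; [apply A0_indep, hi | apply density_A0, hi].
Qed.
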